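(* Let $m,n\ge 1$ and let $B\subseteq [m]\times[n]$ be a board. Let $I\subseteq[m]$ with $|I|=s$ and $J\subseteq[n]$ with $|J|=t$ be such that the subboard $S=B\cap(I\times J)$ is a block of $B$, i.e. (1) for all $i,i'\in I$ and all $c\in[n]\setminus J$: $(i,c)\in B \iff (i',c)\in B$; and (2) for all $a\in[m]\setminus I$ and all $j,j'\in J$: $(a,j)\in B\iff(a,j')\in B$. For $0\le j\le \min(s,t)$ and any choice of subsets $I'\subseteq I$, $J'\subseteq J$ with $|I'|=|J'|=j$, let $$B_{S,j}=\{(a,b)\in B:\ a\notin I',\ b\notin J',\ (a,b)\notin I\times J\}$$ (the $j$-th inclusion board of $B$ relative to $S$). Then $R(B_{S,j};x)$ does not depend on the choice of $I',J'$, and $$R(B;x)=\sum_{j=0}^{\min(s,t)} r_j(S)\,x^j\,R(B_{S,j};x),$$ where $r_j(S)$ is the coefficient of $x^j$ in $R(S;x)$.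
   Context: A board is a finite set of cells $B\subseteq[m]\times[n]$ (rows indexed by $[m]=\{1,\dots,m\}$, columns by $[n]$). A placement of $k$ non-attacking rooks on $B$ is a set of $k$ cells $\{(x_1,y_1),\dots,(x_k,y_k)\}\subseteq B$ such that $x_i=x_j$ or $y_i=y_j$ implies $i=j$. For $k\ge 0$, $r_k(B)$ denotes the number of such placements (with $r_0(B)=1$), and the rook polynomial of $B$ is $R(B;x)=\sum_{k\ge 0} r_k(B)x^k$. The same definitions apply to any set of cells, in particular to $S$ and to $B_{S,j}$. *)

(* Defs.v *)
From HB Require Import structures.
From mathcomp Require Import all_boot all_order all_algebra.
Set Implicit Arguments. Unset Strict Implicit. Unset Printing Implicit Defensive.
Import GRing.Theory.
Local Open Scope ring_scope.

(* Cells of [m] x [n] are pairs ('I_m * 'I_n); rows/columns are indexed 0..m-1, 0..n-1. *)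
Definition cell (m n : nat) := ('I_m * 'I_n)%type.

Definition nonattacking m n (P : {set cell m n}) : bool :=
  [forall p in P, forall q in P, ((p.1 == q.1) || (p.2 == q.2)) ==> (p == q)].

Definition rook_num m n (k : nat) (B : {set cell m n}) : nat :=
  #|[set P : {set cell m n} | (P \subset B) && nonattacking P && (#|P| == k)]|.

(* R(B;x) = sum_k r_k(B) x^k  (r_k(B) = 0 for k > |B|). *)
Definition rook_poly m n (B : {set cell m n}) : {poly int} :=
  \sum_(k < #|B|.+1) (rook_num k B)%:R *: 'X^k.

Definition is_block m n (B : {set cell m n}) (I : {set 'I_m}) (J : {set 'I_n}) : Prop :=
  (forall (i i' : 'I_m) (c : 'I_n), i \in I -> i' \in I -> c \notin J ->
      ((i, c) \in B) = ((i', c) \in B)) /\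
  (forall (a : 'I_m) (j j' : 'I_n), a \notin I -> j \in J -> j' \in J ->
      ((a, j) \in B) = ((a, j') \in B)).

Definition subboard m n (B : {set cell m n}) (I : {set 'I_m}) (J : {set 'I_n}) :=
  [set p in B | (p.1 \in I) && (p.2 \in J)].

Definition inclusion_board m n (B : {set cell m n}) (I : {set 'I_m}) (J : {set 'I_n})
    (I' : {set 'I_m}) (J' : {set 'I_n}) : {set cell m n} :=
  [set p in B | (p.1 \notin I') && (p.2 \notin J') && ~~ ((p.1 \in I) && (p.2 \in J))].

(* Main.v *)
Require Import Defs.
From HB Require Import structures.
From mathcomp Require Import all_boot all_order all_algebra.
From mathcomp Require Import fingroup perm.
Set Implicit Arguments. Unset Strict Implicit. Unset Printing Implicit Defensive.
Import GRing.Theory.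
Local Open Scope ring_scope.

Lemma sum_card (T : finType) (p : pred {set T}) (N : nat) (F : nat -> {poly int}) :
  (forall P, p P -> (#|P| < N.+1)%N) ->
  \sum_(P | p P) F #|P| =
  \sum_(k < N.+1) (#|[set P | p P && (#|P| == k)]|)%:R *: F k.
Proof.
move=> hN.
rewrite (partition_big (fun P : {set T} => (inord #|P| : 'I_N.+1)) xpredT) //=.
apply: eq_bigr => k _.
rewrite scaler_nat -sumr_const.
apply: eq_big => P.
  rewrite inE; apply/andP/andP => -[hp hk]; split => //.
    by move/eqP: hk => <-; rewrite inordK ?hN.
  by apply/eqP/val_inj; rewrite /= inordK ?hN // (eqP hk).
move=> /andP[hp /eqP <-]; by rewrite inordK ?hN.
Qed.

Lemma nonattackingP m n (P : {set cell m n}) :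
  reflect (forall p q, p \in P -> q \in P -> (p.1 == q.1) || (p.2 == q.2) -> p = q)
          (nonattacking P).
Proof.
apply: (iffP forallP) => [H p q pP qP hpq | H p].
  have := H p; rewrite pP /= => /forallP /(_ q); rewrite qP hpq /=.
  by move/eqP.
apply/implyP => pP; apply/forallP => q; apply/implyP => qP; apply/implyP => h.
by apply/eqP; apply: H.
Qed.

Definition rp m n (B : {set cell m n}) : {poly int} :=
  \sum_(P : {set cell m n} | (P \subset B) && nonattacking P) 'X^#|P|.

Lemma rook_polyE m n (B : {set cell m n}) : rook_poly B = rp B.
Proof.
rewrite /rp (@sum_card _ (fun P : {set cell m n} => (P \subset B) && nonattacking P) #|B| (fun k => 'X^k)) //.
by move=> P /andP[hs _]; rewrite ltnS subset_leq_card.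
Qed.

Section Indep.
Variables (m n : nat) (B : {set cell m n}) (I : {set 'I_m}) (J : {set 'I_n}).
Variables (s : 'I_m -> 'I_m) (t : 'I_n -> 'I_n).
Hypotheses (hB : is_block B I J) (sinj : injective s) (tinj : injective t)
  (sfix : forall x, x \notin I -> s x = x) (tfix : forall y, y \notin J -> t y = y).

Lemma sI x : (s x \in I) = (x \in I).
Proof.
case xI: (x \in I); last by rewrite sfix ?xI.
apply/negP => /negP h; have := sfix h; move/sinj => e; by rewrite e xI in h.
Qed.

Lemma tJ y : (t y \in J) = (y \in J).
Proof.
case xI: (y \in J); last by rewrite tfix ?xI.
apply/negP => /negP h; have := tfix h; move/tinj => e; by rewrite e xI in h.
Qed.

Definition fc (p : cell m n) : cell m n := (s p.1, t p.2).

Lemma fc_inj : injective fc.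
Proof. by move=> [a b] [c d] [/sinj -> /tinj ->]. Qed.

Lemma mem_fc (I1 : {set 'I_m}) (J1 : {set 'I_n}) p :
  (fc p \in inclusion_board B I J (s @: I1) (t @: J1)) =
  (p \in inclusion_board B I J I1 J1).
Proof.
case: p => a b; rewrite !inE /fc /= (mem_imset _ _ sinj) (mem_imset _ _ tinj) sI tJ.
case aI: (a \in I); case bJ: (b \in J); rewrite /= ?andbF ?andbT //.
- rewrite (tfix (negbT bJ)); case: hB => h1 _; by rewrite (h1 (s a) a b) ?sI ?aI ?bJ.
- rewrite (sfix (negbT aI)); case: hB => _ h2; by rewrite (h2 a (t b) b) ?tJ ?aI ?bJ.
- by rewrite (sfix (negbT aI)) (tfix (negbT bJ)).
Qed.

Lemma rp_map (I1 : {set 'I_m}) (J1 : {set 'I_n}) :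
  rp (inclusion_board B I J (s @: I1) (t @: J1)) = rp (inclusion_board B I J I1 J1).
Proof.
rewrite /rp (reindex_inj (imset_inj fc_inj)) /=.
apply: eq_big => P; last by rewrite card_imset //; exact: fc_inj.
congr andb.
  apply/subsetP/subsetP => h x.
    by move=> xP; rewrite -mem_fc; apply: h; apply: imset_f.
  by case/imsetP => y yP ->; rewrite mem_fc; apply: h.
apply/nonattackingP/nonattackingP => h.
  move=> p q pP qP hpq; apply: fc_inj; apply: h; try exact: imset_f.
  by rewrite /fc /= (inj_eq sinj) (inj_eq tinj).
move=> y1 y2 /imsetP[x1 x1P ->] /imsetP[x2 x2P ->]; rewrite /fc /= (inj_eq sinj) (inj_eq tinj) => hx.
by rewrite (h x1 x2).
Qed.
End Indep.

Lemma exists_map (T : finType) (C : {set T}) (k : nat) : forall (A A' : {set T}),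
  #|A :\: A'| = k -> A \subset C -> A' \subset C -> #|A| = #|A'| ->
  exists s : T -> T, [/\ injective s, (forall x, x \notin C -> s x = x) & s @: A = A'].
Proof.
elim: k => [|k IH] A A' hk hA hA' hc.
  exists id; split => //; rewrite imset_id.
  apply/eqP; rewrite eqEcard -setD_eq0 -cards_eq0 hk eqxx /= hc //.
have /set0Pn [x xin] : A :\: A' != set0 by rewrite -card_gt0 hk.
have : (0 < #|A' :\: A|)%N by rewrite cardsD setIC -hc -cardsD hk.
rewrite card_gt0 => /set0Pn [y yin].
move: xin yin; rewrite !inE => /andP[xA' xA] /andP[yA yA'].
have xC : x \in C by apply: (subsetP hA).
have yC : y \in C by apply: (subsetP hA').
pose t := tperm x y.
have memt z : (z \in t @: A) = (t z \in A).
  by rewrite -{1}(tpermK x y z) mem_imset //; exact: perm_inj.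
have [s [sinj sfix sim]] : exists s : T -> T,
    [/\ injective s, (forall x, x \notin C -> s x = x) & s @: (t @: A) = A'].
  apply: IH.
  - have -> : (t @: A) :\: A' = (A :\: A') :\ x.
      apply/setP => z; rewrite !inE memt.
      case: (eqVneq z x) => [->|zx]; first by rewrite tpermL (negbTE yA) andbF.
      case: (eqVneq z y) => [->|zy]; first by rewrite yA'.
      by rewrite tpermD // eq_sym.
    by move/eqP: hk; rewrite (cardsD1 x (A :\: A')) !inE xA xA' => /eqP [].
  - apply/subsetP => z; rewrite memt.
    case: (eqVneq z x) => [->|zx] //.
    case: (eqVneq z y) => [->|zy] //.
    by rewrite tpermD 1?eq_sym // => /(subsetP hA).
  - exact: hA'.
  - rewrite card_imset ?hc //; exact: perm_inj.
exists (s \o t); split.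
- by apply: inj_comp => //; exact: perm_inj.
- move=> z zC /=; rewrite tpermD ?sfix //; apply/eqP => e; subst z.
  + by rewrite xC in zC.
  + by rewrite yC in zC.
- by rewrite imset_comp.
Qed.

Lemma indep m n (B : {set cell m n}) (I : {set 'I_m}) (J : {set 'I_n})
  (I1 I2 : {set 'I_m}) (J1 J2 : {set 'I_n}) :
  is_block B I J -> I1 \subset I -> I2 \subset I -> J1 \subset J -> J2 \subset J ->
  #|I1| = #|I2| -> #|J1| = #|J2| ->
  rp (inclusion_board B I J I1 J1) = rp (inclusion_board B I J I2 J2).
Proof.
move=> hB h1 h2 h3 h4 c1 c2.
have [s [sinj sfix <-]] := exists_map (erefl _) h1 h2 c1.
have [t [tinj tfix <-]] := exists_map (erefl _) h3 h4 c2.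
by rewrite rp_map.
Qed.

Section Decomp.
Variables (m n : nat) (B : {set cell m n}) (I : {set 'I_m}) (J : {set 'I_n}).
Definition IJ := [set p : cell m n | (p.1 \in I) && (p.2 \in J)].

Lemma inclE (I' : {set 'I_m}) (J' : {set 'I_n}) q :
  (q \in inclusion_board B I J I' J') =
  [&& q \in B, q.1 \notin I', q.2 \notin J' & q \notin IJ].
Proof. by rewrite !inE !andbA. Qed.

Lemma subbE q : (q \in subboard B I J) = (q \in B) && (q \in IJ).
Proof. by rewrite !inE. Qed.

Lemma key (PS Q : {set cell m n}) :
  PS \subset subboard B I J -> nonattacking PS ->
  ((PS :|: Q \subset B) && nonattacking (PS :|: Q)) && ((PS :|: Q) :&: IJ == PS)
    && ((PS :|: Q) :\: IJ == Q) =
  (Q \subset inclusion_board B I J (fst @: PS) (snd @: PS)) && nonattacking Q.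
Proof.
move=> hS hna.
have PSP p : p \in PS -> (p \in B) && (p \in IJ).
  by move=> pP; rewrite -subbE (subsetP hS).
apply/idP/idP.
  case/andP => /andP [/andP [H1 /nonattackingP H2] /eqP H3] /eqP H4.
  apply/andP; split.
    apply/subsetP => q qQ.
    have : q \in (PS :|: Q) :\: IJ by rewrite H4.
    rewrite inE => /andP [qIJ qU].
    rewrite inclE qIJ (subsetP H1) //= andbT.
    apply/andP; split.
      apply/negP => /imsetP [p pP e].
      have pq : p = q by apply: H2; rewrite ?inE ?pP ?qQ ?orbT // e eqxx.
      by have := PSP p pP; rewrite pq (negbTE qIJ) andbF.
    apply/negP => /imsetP [p pP e].
    have pq : p = q by apply: H2; rewrite ?inE ?pP ?qQ ?orbT // e eqxx orbT.
    by have := PSP p pP; rewrite pq (negbTE qIJ) andbF.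
  apply/nonattackingP => p q pQ qQ; apply: H2; by rewrite inE ?pQ ?qQ orbT.
case/andP => hQ /nonattackingP naQ.
have QP q : q \in Q -> [&& q \in B, q.1 \notin fst @: PS, q.2 \notin snd @: PS & q \notin IJ].
  by move=> qQ; rewrite -inclE (subsetP hQ).
have PSP' p : p \in PS -> p \in IJ by move=> /PSP /andP[].
have QP' q : q \in Q -> q \notin IJ by move=> /QP /and4P[].
apply/andP; split; first (apply/andP; split; first (apply/andP; split)).
- apply/subsetP => z; rewrite inE => /orP [/PSP /andP[] //| /QP /and4P[] //].
- apply/nonattackingP => p q; rewrite !inE => /orP [pP|pQ] /orP [qP|qQ].
  + by move/nonattackingP: hna; apply.
  + case/QP: qQ => /and4P [_ h1 h2 _].
    case/orP => /eqP e.
      by move: h1; rewrite -e (imset_f fst pP).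
    by move: h2; rewrite -e (imset_f snd pP).
  + case/QP: pQ => /and4P [_ h1 h2 _].
    case/orP => /eqP e.
      by move: h1; rewrite e (imset_f fst qP).
    by move: h2; rewrite e (imset_f snd qP).
  + exact: naQ.
- apply/eqP/setP => z; rewrite in_setI in_setU.
  case zP: (z \in PS); first by rewrite (PSP' z zP).
  case zQ: (z \in Q) => //=; by rewrite (negbTE (QP' z zQ)).
- apply/eqP/setP => z; rewrite in_setD in_setU.
  case zQ: (z \in Q); first by rewrite (QP' z zQ) orbT.
  by case zP: (z \in PS); rewrite /= ?orbF ?andbF // (PSP' z zP).
Qed.

Lemma decomp :
  rp B = \sum_(PS : {set cell m n} | (PS \subset subboard B I J) && nonattacking PS)
           'X^#|PS| * rp (inclusion_board B I J (fst @: PS) (snd @: PS)).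
Proof.
rewrite /rp (partition_big (fun P : {set cell m n} => P :&: IJ)
   (fun PS => (PS \subset subboard B I J) && nonattacking PS)) /=.
  apply: eq_bigr => PS /andP[hS hna].
  rewrite mulr_sumr.
  rewrite (reindex_onto (fun Q => PS :|: Q) (fun P => P :\: IJ)) /=.
    apply: eq_big => Q; first exact: key.
    case/andP => /andP [_ /eqP H3] /eqP H4.
    by rewrite -exprD -(cardsID IJ (PS :|: Q)) H3 H4.
  by move=> P /andP[_ /eqP <-]; rewrite setID.
move=> P /andP [hB /nonattackingP hna]; apply/andP; split.
  apply/subsetP => z; rewrite !inE => /andP [zP ->]; by rewrite (subsetP hB).
by apply/nonattackingP => p q; rewrite !inE => /andP[pP _] /andP[qP _]; apply: hna.
Qed.
End Decomp.

Theorem theorem3 (m n : nat) (hm : (1 <= m)%N) (hn : (1 <= n)%N)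
    (B : {set cell m n}) (I : {set 'I_m}) (J : {set 'I_n}) :
  is_block B I J ->
  (* independence of the choice of I', J' *)
  (forall (j : nat) (I1 I2 : {set 'I_m}) (J1 J2 : {set 'I_n}),
      (j <= minn #|I| #|J|)%N ->
      I1 \subset I -> I2 \subset I -> J1 \subset J -> J2 \subset J ->
      #|I1| = j -> #|I2| = j -> #|J1| = j -> #|J2| = j ->
      rook_poly (inclusion_board B I J I1 J1) = rook_poly (inclusion_board B I J I2 J2))
  /\
  (* the expansion, for any choices I'_j, J'_j *)
  (forall (Ip : nat -> {set 'I_m}) (Jp : nat -> {set 'I_n}),
      (forall j : nat, (j <= minn #|I| #|J|)%N ->
         [/\ Ip j \subset I, Jp j \subset J, #|Ip j| = j & #|Jp j| = j]) ->
      rook_poly B =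
      \sum_(j < (minn #|I| #|J|).+1)
         (rook_num j (subboard B I J))%:R *: 'X^j
           * rook_poly (inclusion_board B I J (Ip j) (Jp j))).
Proof.
move=> hB; split.
  move=> j I1 I2 J1 J2 _ h1 h2 h3 h4 c1 c2 c3 c4.
  by rewrite !rook_polyE; apply: indep => //; rewrite ?c1 ?c2 ?c3 ?c4.
move=> Ip Jp hIp.
rewrite rook_polyE (decomp B I J).
have bnd (PS : {set cell m n}) : (PS \subset subboard B I J) && nonattacking PS ->
    #|[set x.1 | x in PS]| = #|PS| /\ (#|PS| <= minn #|I| #|J|)%N.
  case/andP => hS /nonattackingP hna.
  have c1 : #|[set x.1 | x in PS]| = #|PS|.
    by apply: card_in_imset => p q pP qP e; apply: hna => //; rewrite e eqxx.
  have c2 : #|[set x.2 | x in PS]| = #|PS|.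
    by apply: card_in_imset => p q pP qP e; apply: hna => //; rewrite e eqxx orbT.
  split => //; rewrite leq_min -{1}c1 -c2; apply/andP; split; apply: subset_leq_card;
    apply/subsetP => z /imsetP [p pP ->]; have := subsetP hS p pP; rewrite !inE;
    by case/and3P.
transitivity (\sum_(PS : {set cell m n} | (PS \subset subboard B I J) && nonattacking PS)
   (fun k => 'X^k * rook_poly (inclusion_board B I J (Ip k) (Jp k))) #|PS|).
  apply: eq_bigr => PS hPS /=; congr (_ * _).
  have [c1 hle] := bnd PS hPS.
  have [i1 j1 ci cj] := hIp _ hle.
  case/andP: hPS => hS /nonattackingP hna.
  have c2 : #|[set x.2 | x in PS]| = #|PS|.
    by apply: card_in_imset => p q pP qP e; apply: hna => //; rewrite e eqxx orbT.
  rewrite rook_polyE; apply: indep => //; rewrite ?c1 ?c2 ?ci ?cj //;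
    apply/subsetP => z /imsetP [p pP ->]; have := subsetP hS p pP; rewrite !inE;
    by case/and3P.
rewrite (@sum_card _ (fun PS : {set cell m n} => (PS \subset subboard B I J) && nonattacking PS)
   (minn #|I| #|J|) (fun k => 'X^k * rook_poly (inclusion_board B I J (Ip k) (Jp k)))).
  by apply: eq_bigr => k _; rewrite scalerAl.
by move=> P hP; have [_ ] := bnd P hP.
Qed.
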